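(* Let $q$ be an odd prime power, $d$ an even positive integer, and $A\subset\mathbb F_q^d$. Let $\mathcal{ZR}(A)$ be the number of pairs $(x,y)\in A\times A$ with $\|x-y\|=0$, and let $\Omega^0(A)=\sum_{m\in\mathbb F_q^d:\ \|m\|=0}|\widehat A(m)|^2$. \begin{enumerate} \item If $d\equiv 2\pmod 4$ and $q\equiv 3\pmod 4$, then $$\frac{\mathcal{ZR}(A)}{2}=\frac{|A|^2}{2q}-\frac{q^{\frac{3d}{2}}}{2}\Omega^0(A)+\frac{q^{\frac{d-2}{2}}|A|}{2}.$$ \item If $d\equiv 0\pmod 4$, or $d\equiv 2\pmod 4$ and $q\equiv 1\pmod 4$, then $$\frac{\mathcal{ZR}(A)}{2}=\frac{|A|^2}{2q}+\frac{q^{\frac{3d}{2}}}{2}\Omega^0(A)-\frac{q^{\frac{d-2}{2}}|A|}{2}.$$ \end{enumerate}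
   Context: For $x\in\mathbb F_q^d$, $\|x\|=x_1^2+\cdots+x_d^2$. $\chi$ is the canonical nontrivial additive character of $\mathbb F_q$, and for $A\subset\mathbb F_q^d$, $\widehat{A}(m)=q^{-d}\sum_{x\in A}\chi(-m\cdot x)$ is the Fourier transform of the indicator function of $A$. *)

(* Defs.v *)
From mathcomp Require Import all_boot all_order all_algebra all_field.
Set Implicit Arguments. Unset Strict Implicit. Unset Printing Implicit Defensive.
Import Order.TTheory GRing.Theory Num.Theory.
Local Open Scope ring_scope.

Section Defs.
Variable F : finFieldType.

(* q = #|F| = p ^ n with p the characteristic *)
Definition charp : nat := pdiv #|F|.
Definition extdeg : nat := logn charp #|F|.

(* absolute trace F_q -> F_p (lands in the prime subfield) *)
Definition abstrace (x : F) : F := \sum_(i < extdeg) x ^+ (charp ^ i).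

Definition trace_nat (x : F) : nat :=
  if [pick k : 'I_charp | (k%:R : F) == abstrace x] is Some k then val k else 0%N.

(* omega = e^{2 pi i / p}: p.-root (-1) is e^{i pi / p} (minimal argument) *)
Definition omega : algC := (charp.-root (-1)) ^+ 2.

Definition chi (x : F) : algC := omega ^+ trace_nat x.

Variable d : nat.

Definition sqnorm (x : 'rV[F]_d) : F := \sum_(i < d) (x ord0 i) ^+ 2.
Definition dotp (m x : 'rV[F]_d) : F := \sum_(i < d) m ord0 i * x ord0 i.

Definition fourier (A : {set 'rV[F]_d}) (m : 'rV[F]_d) : algC :=
  (#|F|%:R ^+ d)^-1 * \sum_(x in A) chi (- dotp m x).

Definition ZR (A : {set 'rV[F]_d}) : nat :=
  #|[set xy in setX A A | sqnorm (xy.1 - xy.2) == 0]|.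

Definition Omega0 (A : {set 'rV[F]_d}) : algC :=
  \sum_(m : 'rV[F]_d | sqnorm m == 0) `|fourier A m| ^+ 2.
End Defs.

(* Main.v *)
Require Import Defs.
From mathcomp Require Import all_boot all_order all_algebra all_field zify ring.
Set Implicit Arguments. Unset Strict Implicit. Unset Printing Implicit Defensive.
Import Order.TTheory GRing.Theory Num.Theory.
Local Open Scope ring_scope.

Section Char.
Variable F : finFieldType.

Lemma charp_spec : [/\ prime (charp F), charp F \in [pchar F],
   #|F| = (charp F ^ extdeg F)%N & (0 < extdeg F)%N].
Proof.
have [p0 pr0 ch0] := finPcharP F.
have card : #|F| = (p0 ^ logn p0 #|F|)%N := card_pprimeChar ch0.
have gt1 := finNzRing_gt1 F.
have n0 : (0 < logn p0 #|F|)%N.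
  by rewrite lt0n; apply/eqP=> e; move: gt1; rewrite card e.
have cp : charp F = p0.
  by rewrite /charp card -(prednK n0) pdiv_pfactor.
by rewrite /extdeg cp; split.
Qed.

Local Notation p := (charp F).
Local Notation n := (extdeg F).

Lemma p_prime : prime p. Proof. by case: charp_spec. Qed.
Lemma p_char : p \in [pchar F]. Proof. by case: charp_spec. Qed.
Lemma cardF : #|F| = (p ^ n)%N. Proof. by case: charp_spec. Qed.
Lemma n_gt0 : (0 < n)%N. Proof. by case: charp_spec. Qed.

Lemma frobD (x y : F) i : (x + y) ^+ (p ^ i) = x ^+ (p ^ i) + y ^+ (p ^ i).
Proof.
apply: exprDn_pchar; rewrite pnatX (pnatE _ p_prime) p_char //.
Qed.

Lemma abstraceD (x y : F) : abstrace (x + y) = abstrace x + abstrace y.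
Proof. by rewrite /abstrace -big_split /=; apply: eq_bigr => i _; rewrite frobD. Qed.

Lemma shift_sum (f : nat -> F) m : f m = f 0%N ->
  \sum_(i < m) f i.+1 = \sum_(i < m) f i.
Proof.
case: m => [|m] e; first by rewrite !big_ord0.
by rewrite big_ord_recr big_ord_recl /= e addrC.
Qed.

Lemma abstrace_frob (x : F) : abstrace x ^+ p = abstrace x.
Proof.
rewrite /abstrace -(pFrobenius_autE p_char) rmorph_sum /=.
rewrite -[RHS](@shift_sum (fun i => x ^+ (p ^ i))); last first.
  by rewrite -cardF expf_card expn0 expr1.
by apply: eq_bigr => i _; rewrite pFrobenius_autE -exprM expnSr.
Qed.

Lemma natr_inj_lt (k j : nat) : (k < p)%N -> (j < p)%N -> (k%:R = j%:R :> F) -> k = j.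
Proof.
wlog hkj : k j / (j <= k)%N.
  move=> W hk hj e; case: (leqP j k) => h; first exact: W.
  by apply/esym/W => //; apply: ltnW.
move=> hk hj e.
have : (p %| k - j)%N by rewrite (dvdn_pcharf p_char) natrB // e subrr.
have hlt : (k - j < p)%N by apply: leq_ltn_trans hk; apply: leq_subr.
case: (posnP (k - j)) => [h0 _|hpos hd].
  by apply/eqP; rewrite eqn_leq hkj -subn_eq0 h0.
by move: (dvdn_leq hpos hd); rewrite leqNgt hlt.
Qed.

Lemma prime_subfield (y : F) : y ^+ p = y -> exists k : 'I_p, (val k)%:R = y.
Proof.
move=> hy; suff /existsP [k /eqP e] : [exists k : 'I_p, (val k)%:R == y] by exists k.
apply: negbNE; apply/negP => /existsPn hn.
pose P : {poly F} := 'X^p - 'X.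
have szP : size P = p.+1.
  by rewrite /P size_polyDl ?size_polyXn // size_polyN size_polyX ltnS prime_gt1 ?p_prime.
have P0 : P != 0 by rewrite -size_poly_eq0 szP.
pose rs := y :: [seq (val k)%:R | k <- enum 'I_p].
have := @max_poly_roots _ P rs P0.
rewrite szP /= size_map size_enum_ord ltnn.
have -> : root P y by rewrite /root !hornerE hy subrr.
have -> : all (root P) [seq (val k)%:R | k <- enum 'I_p].
  apply/allP => z /mapP [k _ ->].
  by rewrite /root !hornerE -(pFrobenius_autE p_char) pFrobenius_aut_nat subrr.
rewrite /= => /(_ isT) H; suff: false by []; apply: H; apply/andP; split.
  apply/mapP => [[k _ e]]; move: (hn k); by rewrite e eqxx.
rewrite map_inj_uniq ?enum_uniq // => a b e; apply: val_inj.
exact: natr_inj_lt (ltn_ord a) (ltn_ord b) e.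
Qed.


Lemma tn_spec (x : F) : (trace_nat x < p)%N /\ (trace_nat x)%:R = abstrace x.
Proof.
have [k ek] := prime_subfield (abstrace_frob x).
rewrite /trace_nat; case: pickP => [k' /eqP e | h]; first by split; [exact: ltn_ord | exact: e].
by move: (h k); rewrite ek eqxx.
Qed.

Lemma tnD (x y : F) : trace_nat (x + y) = (trace_nat x + trace_nat y) %[mod p].
Proof.
have [h1 e1] := tn_spec (x + y); have [h2 e2] := tn_spec x; have [h3 e3] := tn_spec y.
have pp := prime_gt0 p_prime.
apply: natr_inj_lt; rewrite ?ltn_mod //.
by rewrite !(GRing.natr_mod_pchar p_char) natrD e1 e2 e3 abstraceD.
Qed.

Lemma trace_nontriv : exists x : F, abstrace x != 0.
Proof.
suff /existsP [x hx] : [exists x : F, abstrace x != 0] by exists x.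
apply: negbNE; apply/negP => /existsPn hn.
have p1 := prime_gt1 p_prime.
pose P : {poly F} := \sum_(i < n) 'X^(p ^ i).
have P1 : P`_1 = 1.
  rewrite /P coef_sum (bigD1 (Ordinal n_gt0)) //= expn0 coefXn eqxx big1 ?addr0 // => i hi.
  rewrite coefXn; case: eqP => // h; exfalso.
  move: hi h; case: i => [[|i] hi] //= _ h.
  by move: h; rewrite expnS; nia.
have P0 : P != 0.
  by apply/eqP => e; move: P1; rewrite e coef0 => /eqP; rewrite eq_sym oner_eq0.
have szP : (size P <= (p ^ n.-1).+1)%N.
  apply: leq_trans (size_sum _ _ _) _; apply/bigmax_leqP => i _.
  rewrite size_polyXn ltnS leq_exp2l //.
  by rewrite -ltnS prednK ?n_gt0.
have := @max_poly_roots _ P (enum F) P0.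
have -> : all (root P) (enum F).
  apply/allP => x _; rewrite /root horner_sum.
  under eq_bigr do rewrite hornerXn.
  exact: negbNE (hn x).
rewrite enum_uniq -cardE cardF => /(_ isT isT) h.
have := leq_trans h szP; rewrite -{1}(prednK n_gt0) expnS.
have : (0 < p ^ n.-1)%N by rewrite expn_gt0 prime_gt0 // p_prime.
move: (p ^ n.-1)%N => t; nia.
Qed.

Hypothesis oddF : odd #|F|.

Lemma p_odd : odd p.
Proof. by move: oddF; rewrite cardF oddX => /orP [/eqP e|//]; move: n_gt0; rewrite e. Qed.

Lemma p_gt0 : (0 < p)%N. Proof. exact: prime_gt0 p_prime. Qed.

Lemma omega_neq1 : omega F != 1.
Proof.
set r := p.-root (-1 : algC).
have hr : r ^+ p = -1 by rewrite /r rootCK // p_gt0.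
have two0 : (1 + 1 : algC) != 0 by rewrite -[1 + 1]/(2%:R) pnatr_eq0.
apply/eqP => h.
have : (r - 1) * (r + 1) = 0.
  rewrite -subr_sqr expr1n; rewrite /omega -/r in h; by rewrite h subrr.
move/eqP; rewrite mulf_eq0 subr_eq0 addr_eq0 => /orP [/eqP r1 | /eqP rm1].
  by move: hr; rewrite r1 expr1n => /eqP; rewrite -addr_eq0 (negPf two0).
have [w pw] := C_prim_root_exists p_gt0.
have w1 : w != 1.
  apply/eqP => e; have := prim_order_dvd pw 1; rewrite e expr1n eqxx.
  by rewrite dvdn1 => /eqP ep; move: p_prime; rewrite ep.
have nw : `|w| = 1.
  by apply/eqP; rewrite -(pexpr_eq1 p_gt0) // -normrX (prim_expr_order pw) normr1.
have key : forall y : algC, y ^+ p = -1 -> 0 <= 'Im y -> 'Re y <= -1.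
  move=> y hy hI; have := rootC_Re_max p_gt0 hy hI; rewrite -/r rm1.
  have -> : 'Re (-1 : algC) = -1 by apply/Creal_ReP; exact: rpredN1.
  by [].
have y0p : (- w) ^+ p = -1.
  by rewrite exprNn -signr_odd p_odd expr1 (prim_expr_order pw) mulr1.
have Rew : 1 <= 'Re w.
  case/orP: (real_leVge (Creal_Im (- w)) (real0 _)) => hI.
    have yp : ((- w)^*) ^+ p = -1 by rewrite -rmorphXn y0p rmorphN1.
    have hI' : 0 <= 'Im ((- w)^*) by rewrite Im_conj oppr_ge0.
    have := key _ yp hI'; by rewrite Re_conj raddfN /= lerN2.
  have := key _ y0p hI; by rewrite raddfN /= lerN2.
have [le eqR] := leif_Re_Creal w.
have : 'Re w == `|w| by rewrite nw eq_le Rew -nw le.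
rewrite eqR => w0; move: w1; by rewrite -(ger0_norm w0) nw eqxx.
Qed.

Lemma omega_prim : p.-primitive_root (omega F).
Proof.
have hr : (p.-root (-1 : algC)) ^+ p = -1 by rewrite rootCK // p_gt0.
have op : omega F ^+ p = 1 by rewrite /omega -exprM mulnC exprM hr sqrrN expr1n.
have [m pm mp] := prim_order_exists p_gt0 op.
have /primeP [_ hd] := p_prime.
case/orP: (hd m mp) => /eqP m1; last by rewrite -m1.
by move: omega_neq1; rewrite -(prim_expr_order pm) m1 expr1 eqxx.
Qed.


Local Notation q := #|F|.
Local Notation ch := (chi (F:=F)).

Lemma chiD (x y : F) : ch (x + y) = ch x * ch y.
Proof.
by rewrite /chi -exprD -(prim_expr_mod omega_prim) tnD (prim_expr_mod omega_prim).
Qed.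

Lemma omega_neq0 : omega F != 0.
Proof. by apply/eqP => e; move: (prim_expr_order omega_prim); rewrite e expr0n gtn_eqF ?p_gt0 // => /eqP; rewrite eq_sym oner_eq0. Qed.

Lemma chi_neq0 x : ch x != 0.
Proof. by rewrite /chi expf_neq0 // omega_neq0. Qed.

Lemma chi0 : ch 0 = 1.
Proof.
have := chiD 0 0; rewrite addr0 => e.
by apply: (mulfI (chi_neq0 0)); rewrite -e mulr1.
Qed.

Lemma chi_nontriv : exists c, ch c != 1.
Proof.
have [c hc] := trace_nontriv; exists c.
have [lt e] := tn_spec c.
rewrite /chi -(prim_order_dvd omega_prim); apply/negP => hd.
have : trace_nat c != 0%N by apply/eqP => e0; move: hc; rewrite -e e0 eqxx.
rewrite -lt0n => pos; by move: (dvdn_leq pos hd); rewrite leqNgt lt.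
Qed.

Lemma sum_chi (a : F) : \sum_(x : F) ch (a * x) = if a == 0 then q%:R else 0.
Proof.
case: eqP => [->|/eqP anz].
  under eq_bigr do rewrite mul0r chi0.
  by rewrite sumr_const cardT.
have -> : \sum_(x : F) ch (a * x) = \sum_(x : F) ch x.
  by rewrite [RHS](reindex_inj (mulfI anz)).
have [c hc] := chi_nontriv.
have : \sum_(x : F) ch x = ch c * \sum_(x : F) ch x.
  rewrite {1}(reindex_inj (addrI c)) /= mulr_sumr.
  by apply: eq_bigr => x _; rewrite chiD.
set S := \sum_x _.
move/eqP; rewrite -subr_eq0 -{1}[S]mul1r -mulrBl mulf_eq0 subr_eq0 eq_sym (negPf hc) /=.
by move/eqP.
Qed.

Lemma norm_chi x : `|ch x| = 1.
Proof.
have : `|omega F| = 1.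
  by apply/eqP; rewrite -(pexpr_eq1 p_gt0) // -normrX (prim_expr_order omega_prim) normr1.
by move=> h; rewrite /chi normrX h expr1n.
Qed.

Lemma conj_chi x : (ch x)^* = ch (- x).
Proof.
have e : ch x * ch (- x) = 1 by rewrite -chiD subrr chi0.
by rewrite -[LHS]mulr1 -e mulrA -normCKC norm_chi expr1n mul1r.
Qed.


Lemma two_neq0 : (2%:R : F) != 0.
Proof.
rewrite -(dvdn_pcharf p_char); apply/negP => /(dvdn_leq (isT : (0 < 2)%N)).
move: p_odd (prime_gt1 p_prime); case: (charp F) => [|[|[|k]]] //.
Qed.

Definition g (s : F) : algC := \sum_(t : F) ch (s * t ^+ 2).

Lemma g_mulN (s : F) : s != 0 -> g s * g (- s) = q%:R.
Proof.
move=> snz.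
have inj2 : forall u : F, injective (fun t => 2%:R * t - u).
  by move=> u a b /= /addIr /(mulfI two_neq0).
have -> : g s * g (- s) = \sum_(t : F) \sum_(u : F) ch (s * ((2%:R * t - u) * u)).
  rewrite /g mulr_suml; apply: eq_bigr => t _; rewrite mulr_sumr.
  rewrite [LHS](reindex_inj (addIr (- t))) /=.
  by apply: eq_bigr => u _; rewrite -chiD; congr ch; ring.
rewrite exchange_big /=.
have -> : \sum_(u : F) \sum_(t : F) ch (s * ((2%:R * t - u) * u))
        = \sum_(u : F) \sum_(t : F) ch ((s * u) * t).
  apply: eq_bigr => u _; rewrite [RHS](reindex_inj (inj2 u)) /=.
  by apply: eq_bigr => t _; congr ch; ring.
under eq_bigr do rewrite sum_chi.
rewrite (bigD1 0) //= mulr0 eqxx big1 ?addr0 // => u /negPf un.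
by rewrite mulf_eq0 (negPf snz) un.
Qed.

Lemma g_sq_case (i s : F) : i ^+ 2 = -1 -> g (- s) = g s.
Proof.
move=> hi; have inz : i != 0 by apply/eqP => e; move: hi; rewrite e expr0n /= => /eqP; rewrite eq_sym oppr_eq0 oner_eq0.
rewrite /g [LHS](reindex_inj (mulfI inz)) /=.
by apply: eq_bigr => t _; rewrite exprMn hi; congr ch; ring.
Qed.

Definition r (a : F) : nat := #|[set t : F | t ^+ 2 == a]|.

Lemma r_le2 a : (r a <= 2)%N.
Proof.
rewrite /r; case: (set_0Vmem [set t : F | t ^+ 2 == a]) => [->|[t0]]; first by rewrite cards0.
rewrite inE => /eqP h0.
apply: leq_trans (_ : #|[set t0; - t0]| <= 2)%N.
  apply: subset_leq_card; apply/subsetP => t; rewrite !inE -h0 => /eqP e.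
  have : (t - t0) * (t + t0) == 0 by rewrite -subr_sqr e subrr.
  by rewrite mulf_eq0 subr_eq0 addr_eq0.
by rewrite cards2; case: (_ != _).
Qed.

Lemma r0 : r 0 = 1%N.
Proof.
rewrite /r; have -> : [set t : F | t ^+ 2 == 0] = [set 0] by apply/setP => t; rewrite !inE expf_eq0.
by rewrite cards1.
Qed.

Lemma sum_r : (\sum_(a : F) r a = q)%N.
Proof.
rewrite /r; under eq_bigr do rewrite -sum1_card big_mkcond /=.
rewrite exchange_big /=; rewrite -[q]sum1_card.
rewrite [RHS]big_mkcond /=; apply: eq_bigr => t _.
rewrite (bigD1 (t ^+ 2)) //= inE eqxx big1 ?addn0 // => a; rewrite inE eq_sym => /negPf ->.
done.
Qed.

Lemma r_pair (a : F) : (forall i : F, i ^+ 2 != -1) -> (r a + r (- a) <= 2)%N.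
Proof.
move=> hn; have [->|anz] := eqVneq a 0; first by rewrite oppr0 r0.
case: (posnP (r a)) => [->|]; first by rewrite add0n r_le2.
case: (posnP (r (- a))) => [->|]; first by rewrite addn0 r_le2.
rewrite /r !card_gt0 => /set0Pn [u]; rewrite inE => /eqP hu /set0Pn [t]; rewrite inE => /eqP ht.
have unz : u != 0 by apply/eqP => e; move: hu; rewrite e expr0n /= => /eqP; rewrite eq_sym oppr_eq0 (negPf anz).
move: (hn (t / u)); rewrite expr_div_n ht hu.
by rewrite invrN mulrN mulfV // eqxx.
Qed.

Lemma r_pair_eq (a : F) : (forall i : F, i ^+ 2 != -1) -> (r a + r (- a) = 2)%N.
Proof.
move=> hn.
have hsum : (\sum_(b : F) (r b + r (- b)) = \sum_(b : F) 2)%N.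
  rewrite big_split /= sum_r.
  rewrite (reindex_inj (@oppr_inj F)) /=.
  under [X in (_ + X)%N]eq_bigr do rewrite opprK.
  by rewrite sum_r sum_nat_const cardT muln2 addnn.
have L := @leqif_sum F xpredT (fun b => r b + r (- b) == 2)%N
   (fun b => r b + r (- b))%N (fun _ => 2%N) (fun b _ => leqif_eq (r_pair b hn)).
move: L => [_ e]; move: e; rewrite hsum eqxx => /esym /forallP /(_ a) /=.
by move/eqP.
Qed.

Lemma g_r (s : F) : g s = \sum_(a : F) (r a)%:R * ch (s * a).
Proof.
have E : forall t : F, ch (s * t ^+ 2) = \sum_(a : F) (t ^+ 2 == a)%:R * ch (s * a).
  move=> t; rewrite (bigD1 (t ^+ 2)) //= eqxx mul1r big1 ?addr0 //.
  by move=> a /negPf; rewrite eq_sym => ->; rewrite mul0r.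
rewrite /g; under eq_bigr do rewrite E.
rewrite exchange_big; apply: eq_bigr => a _; rewrite -mulr_suml; congr (_ * _).
rewrite /r -sum1_card natr_sum [RHS]big_mkcond /=; apply: eq_bigr => t _.
by rewrite inE; case: (_ == _).
Qed.

Lemma g_nonsq (s : F) : (forall i : F, i ^+ 2 != -1) -> s != 0 -> g (- s) = - g s.
Proof.
move=> hn snz; apply/eqP; rewrite -addr_eq0 addrC.
rewrite !g_r [X in _ + X](reindex_inj (@oppr_inj F)) /= -big_split /=.
have -> : \sum_(a : F) ((r a)%:R * ch (s * a) + (r (- a))%:R * ch (- s * - a))
   = \sum_(a : F) 2%:R * ch (s * a).
  apply: eq_bigr => a _; rewrite mulrNN -mulrDl -natrD r_pair_eq //.
by rewrite -mulr_sumr sum_chi (negPf snz) mulr0.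
Qed.

Definition sig : algC := if [exists i : F, i ^+ 2 == -1] then 1 else -1.

Lemma g_sq (s : F) : s != 0 -> g s ^+ 2 = sig * q%:R.
Proof.
move=> snz; rewrite /sig; case: existsP => [[i /eqP hi]|hn].
  by rewrite mul1r -(g_mulN snz) (g_sq_case s hi) expr2.
have hn' : forall i : F, i ^+ 2 != -1 by move=> i; apply/negP => h; apply: hn; exists i.
by rewrite -(g_mulN snz) (g_nonsq hn' snz) mulrN mulN1r expr2 opprK.
Qed.

Lemma q_gt1 : (1 < q)%N. Proof. exact: finNzRing_gt1. Qed.

Lemma pow_qm1 (x : F) : x != 0 -> x ^+ q.-1 = 1.
Proof.
move=> xnz; apply: (mulfI xnz); rewrite mulr1 -exprS prednK ?expf_card //.
exact: ltnW q_gt1.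
Qed.

Lemma q_mod4 : (q %% 4 = 1 \/ q %% 4 = 3)%N.
Proof.
have oq : q = ((q %/ 2) * 2 + 1)%N by rewrite {1}(divn_eq q 2) modn2 oddF.
lia.
Qed.

Lemma sq_m1_mod4 (i : F) : i ^+ 2 = -1 -> (q %% 4 = 1)%N.
Proof.
move=> hi; have inz : i != 0.
  by apply/eqP => e; move: hi; rewrite e expr0n /= => /eqP; rewrite eq_sym oppr_eq0 oner_eq0.
case: q_mod4 => // h3.
have e : q.-1 = (2 * (2 * (q %/ 4) + 1))%N.
  have := divn_eq q 4; have := q_gt1; lia.
have := pow_qm1 inz; rewrite e exprM hi -signr_odd oddD oddM /= expr1 => /eqP.
by rewrite eq_sym -addr_eq0 -[1 + 1]/(2%:R : F) (negPf two_neq0).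
Qed.

Lemma mod4_sq_m1 : (q %% 4 = 1)%N -> exists i : F, i ^+ 2 = -1.
Proof.
move=> h1; set k := (q %/ 4)%N.
have eq : q.-1 = (4 * k)%N by have := divn_eq q 4; have := q_gt1; rewrite /k; lia.
have kpos : (0 < k)%N by have := divn_eq q 4; have := q_gt1; rewrite /k; lia.
have [x xnz hx] : exists2 x : F, x != 0 & x ^+ (2 * k) != 1.
  suff /allPn [x] : ~~ all (2 * k).-unity_root (enum [set~ (0 : F)]).
    by rewrite mem_enum !inE unity_rootE => xnz hx; exists x.
  apply/negP => hall.
  have := max_unity_roots (_ : (0 < 2 * k)%N) hall (enum_uniq _).
  rewrite -cardE cardsC1 eq; lia.
have y2 : (x ^+ (2 * k)) ^+ 2 = 1 by rewrite -exprM mulnC mulnA -eq pow_qm1.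
have : (x ^+ (2 * k) - 1) * (x ^+ (2 * k) + 1) == 0 by rewrite -subr_sqr y2 expr1n subrr.
rewrite mulf_eq0 subr_eq0 (negPf hx) /= addr_eq0 => /eqP hy.
by exists (x ^+ k); rewrite -exprM mulnC.
Qed.

Lemma chi_sum (I : finType) (a : I -> F) : ch (\sum_i a i) = \prod_i ch (a i).
Proof. exact: (big_morph ch chiD chi0). Qed.

Lemma four_neq0 : (4%:R : F) != 0.
Proof. by rewrite -[4%N]/(2 * 2)%N natrM mulf_neq0 // two_neq0. Qed.

Lemma sum_quad (s w : F) : s != 0 ->
  \sum_(t : F) ch (s * t ^+ 2 + w * t) = ch (- (w ^+ 2 / (4%:R * s))) * g s.
Proof.
move=> snz; have h2 := two_neq0; have h4 := four_neq0.
rewrite /g mulr_sumr [LHS](reindex_inj (addIr (- (w / (2%:R * s))))) /=.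
apply: eq_bigr => t _; rewrite -chiD; congr ch.
rewrite -[4%N]/(2 * 2)%N natrM; field.
by rewrite snz h4 h2.
Qed.

Lemma sum_inv (c : F) : \sum_(s : F | s != 0) ch (c * s^-1) = (c == 0)%:R * q%:R - 1.
Proof.
have := sum_chi c; rewrite [X in X = _](reindex_inj (@invr_inj F)) /=.
rewrite (bigD1 0) //= invr0 mulr0 chi0 => e; rewrite -[LHS](addKr 1) e.
by case: eqP => _; rewrite ?mul1r ?mul0r addrC.
Qed.

Section Vec.
Variable d : nat.
Local Notation V := 'rV[F]_d.

Lemma sum_rV_prod (f : 'I_d -> F -> algC) :
  \sum_(m : V) \prod_(i < d) f i (m ord0 i) = \prod_(i < d) \sum_(t : F) f i t.
Proof.
rewrite bigA_distr_bigA /=.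
rewrite (reindex (fun g : {ffun 'I_d -> F} => \row_i g i)) /=.
  by apply: eq_bigr => g _; apply: eq_bigr => i _; rewrite mxE.
exists (fun m : V => [ffun i => m ord0 i]) => [g _|m _].
  by apply/ffunP => i; rewrite ffunE mxE.
by apply/rowP => i; rewrite mxE ffunE.
Qed.

Definition K (w : V) : algC := \sum_(m : V | sqnorm m == 0) ch (dotp m w).

Lemma chi_quadform (s : F) (m w : V) : ch (sqnorm m * s + dotp m w)
   = \prod_(i < d) ch (s * (m ord0 i) ^+ 2 + w ord0 i * m ord0 i).
Proof.
rewrite -chi_sum; congr ch; rewrite /sqnorm /dotp mulr_suml -big_split /=.
by apply: eq_bigr => i _; ring.
Qed.

Lemma inner_sum0 (w : V) :
  \prod_(i < d) \sum_(t : F) ch (0 * t ^+ 2 + w ord0 i * t) = (w == 0)%:R * q%:R ^+ d.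
Proof.
under eq_bigr do under eq_bigr do rewrite mul0r add0r.
under eq_bigr do rewrite sum_chi.
case: eqP => [->|/eqP wnz].
  rewrite mul1r (eq_bigr (fun _ => q%:R)) ?prodr_const ?card_ord // => i _.
  by rewrite mxE eqxx.
have [i hi] : exists i, w ord0 i != 0.
  apply/existsP; apply: contraR wnz => /existsPn h; apply/eqP/rowP => i.
  by rewrite mxE; apply/eqP/negPn/h.
by rewrite (bigD1 i) //= (negPf hi) !mul0r.
Qed.

Hypothesis hd : ~~ odd d.

Lemma inner_sumnz (s : F) (w : V) : s != 0 ->
  \prod_(i < d) \sum_(t : F) ch (s * t ^+ 2 + w ord0 i * t)
  = ch (- (sqnorm w / (4%:R * s))) * (sig * q%:R) ^+ (d./2).
Proof.
move=> snz; under eq_bigr do rewrite sum_quad //.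
rewrite big_split /= -chi_sum prodr_const card_ord.
congr (ch _ * _).
  by rewrite /sqnorm mulr_suml -sumrN.
have dE : (2 * d./2)%N = d.
  by rewrite mul2n -[RHS]odd_double_half (negPf hd) add0n.
by rewrite -(g_sq snz) -exprM dE.
Qed.

Lemma cone_sum (w : V) : q%:R * K w
  = (w == 0)%:R * q%:R ^+ d + (sig * q%:R) ^+ (d./2) * ((sqnorm w == 0)%:R * q%:R - 1).
Proof.
rewrite /K big_mkcond mulr_sumr /=.
have E : forall m : V, q%:R * (if sqnorm m == 0 then ch (dotp m w) else 0)
    = \sum_(s : F) ch (sqnorm m * s + dotp m w).
  move=> m; under eq_bigr do rewrite chiD.
  rewrite -mulr_suml sum_chi.
  by case: ifP; rewrite ?mul0r ?mulr0.
under eq_bigr do rewrite E.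
rewrite exchange_big /=.
have E2 : forall s, \sum_(m : V) ch (sqnorm m * s + dotp m w)
    = \prod_(i < d) \sum_(t : F) ch (s * t ^+ 2 + w ord0 i * t).
  move=> s; rewrite -(sum_rV_prod (fun i t => ch (s * t ^+ 2 + w ord0 i * t))).
  by apply: eq_bigr => m _; exact: chi_quadform.
under eq_bigr do rewrite E2.
rewrite (bigD1 0) //= inner_sum0; congr (_ + _).
under eq_bigr => s hs do rewrite (inner_sumnz _ hs).
rewrite -mulr_suml mulrC; congr (_ * _).
under eq_bigr do rewrite invfM mulrA -mulNr.
rewrite sum_inv; congr ((_ : bool)%:R * _ - _).
by rewrite oppr_eq0 mulf_eq0 invr_eq0 (negPf four_neq0) orbF.
Qed.

Local Notation Qd := (q%:R ^+ d : algC).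

Lemma dotpB (m x y : V) : dotp m (x - y) = dotp m x - dotp m y.
Proof. by rewrite /dotp -sumrB; apply: eq_bigr => i _; rewrite !mxE; ring. Qed.

Lemma norm_fourier (A : {set V}) (m : V) :
  `|fourier A m| ^+ 2 = Qd^-1 ^+ 2 * \sum_(x in A) \sum_(y in A) ch (dotp m (x - y)).
Proof.
rewrite normCKC /fourier rmorphM fmorphV rmorphXn /= conjC_nat rmorph_sum /=.
rewrite mulrACA -expr2; congr (_ * _).
rewrite mulr_suml; apply: eq_bigr => x _; rewrite mulr_sumr; apply: eq_bigr => y _.
by rewrite conj_chi opprK -chiD dotpB.
Qed.

Lemma Omega0_K (A : {set V}) :
  Omega0 A = Qd^-1 ^+ 2 * \sum_(x in A) \sum_(y in A) K (x - y).
Proof.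
rewrite /Omega0; under eq_bigr do rewrite norm_fourier.
rewrite -mulr_sumr; congr (_ * _).
rewrite exchange_big /=; apply: eq_bigr => x _.
by rewrite exchange_big.
Qed.

Lemma sum_diag (A : {set V}) :
  \sum_(x in A) \sum_(y in A) ((x - y == 0)%:R : algC) = #|A|%:R.
Proof.
rewrite -sumr_const; apply: eq_bigr => x xA.
rewrite (bigD1 x) //= subrr eqxx big1 ?addr0 // => y /andP [_ hyx].
by rewrite subr_eq0 eq_sym (negPf hyx).
Qed.

Lemma sum_ZR (A : {set V}) :
  \sum_(x in A) \sum_(y in A) ((sqnorm (x - y) == 0)%:R : algC) = (ZR A)%:R.
Proof.
rewrite /ZR -sum1_card natr_sum [RHS]big_mkcond /=.
rewrite pair_big_dep /= [LHS]big_mkcond /=; apply: eq_bigr => [[x y]] _ /=.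
by rewrite !inE /=; case: (x \in A); case: (y \in A); case: (_ == _).
Qed.

Lemma lin_sum (A : {set V}) (f h : V -> algC) (c1 c2 k : algC) :
  \sum_(y in A) (f y * c1 + c2 * (h y * q%:R - k))
  = (\sum_(y in A) f y) * c1 + c2 * ((\sum_(y in A) h y) * q%:R - k * #|A|%:R).
Proof.
rewrite big_split /= -mulr_suml -mulr_sumr sumrB -mulr_suml sumr_const.
by rewrite [k * _]mulr_natr.
Qed.

Lemma sum2_lin (A : {set V}) (a b : V -> V -> algC) (c1 c2 : algC) :
  \sum_(x in A) \sum_(y in A) (a x y * c1 + c2 * (b x y * q%:R - 1))
  = (\sum_(x in A) \sum_(y in A) a x y) * c1
    + c2 * ((\sum_(x in A) \sum_(y in A) b x y) * q%:R - #|A|%:R ^+ 2).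
Proof.
under eq_bigr do rewrite lin_sum mul1r.
by rewrite lin_sum expr2.
Qed.

Lemma Omega0_main (A : {set V}) :
  q%:R * Qd ^+ 2 * Omega0 A
  = #|A|%:R * Qd + (sig * q%:R) ^+ (d./2) * ((ZR A)%:R * q%:R - #|A|%:R ^+ 2).
Proof.
have hq : (q%:R : algC) != 0 by rewrite pnatr_eq0 -lt0n ltnW // q_gt1.
rewrite Omega0_K; set S := \sum_(x in A) _.
have -> : q%:R * Qd ^+ 2 * (Qd^-1 ^+ 2 * S) = q%:R * S.
  by field; rewrite expf_neq0.
rewrite /S mulr_sumr.
under eq_bigr do rewrite mulr_sumr.
under eq_bigr do under eq_bigr do rewrite cone_sum.
by rewrite sum2_lin sum_diag sum_ZR.
Qed.

End Vec.

End Char.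

Unset Implicit Arguments.
Lemma final_alg (x y tau Z a O : algC) : x != 0 -> y != 0 -> tau ^+ 2 = 1 ->
  x * ((x * y) ^+ 2) ^+ 2 * O = a * (x * y) ^+ 2 + tau * (x * y) * (Z * x - a ^+ 2) ->
  Z / 2 = a ^+ 2 / (2 * x) + tau * (x * y) ^+ 3 / 2 * O - tau * y * a / 2.
Proof.
move=> hx hy ht key.
have h2 : (2 : algC) != 0 by rewrite pnatr_eq0.
have -> : O = (a * (x * y) ^+ 2 + tau * (x * y) * (Z * x - a ^+ 2)) / (x * ((x * y) ^+ 2) ^+ 2).
  by rewrite -key; field; rewrite ?hx ?hy.
have : (tau - 1) * (tau + 1) == 0 by rewrite -subr_sqr ht expr1n subrr.
rewrite mulf_eq0 subr_eq0 addr_eq0 => /orP [/eqP -> | /eqP ->]; field; by rewrite ?hx ?hy ?h2.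
Qed.

Arguments final_alg {x y tau Z a O}.

Theorem proposition3p5 (F : finFieldType) (d : nat) (A : {set 'rV[F]_d}) :
  odd #|F| -> (0 < d)%N -> ~~ odd d ->
  ((d %% 4 == 2)%N && (#|F| %% 4 == 3)%N ->
     (ZR A)%:R / 2 =
       (#|A|%:R ^+ 2) / (2 * #|F|%:R)
       - (#|F|%:R ^+ ((3 * d) %/ 2)) / 2 * Omega0 A
       + (#|F|%:R ^+ ((d - 2) %/ 2)) * #|A|%:R / 2 :> algC)
  /\
  ((d %% 4 == 0)%N || ((d %% 4 == 2)%N && (#|F| %% 4 == 1)%N) ->
     (ZR A)%:R / 2 =
       (#|A|%:R ^+ 2) / (2 * #|F|%:R)
       + (#|F|%:R ^+ ((3 * d) %/ 2)) / 2 * Omega0 A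
       - (#|F|%:R ^+ ((d - 2) %/ 2)) * #|A|%:R / 2 :> algC).
Proof.
move=> oddF dpos hd.
have key := Omega0_main oddF hd A.
set h := d./2 in key.
have dE : d = (2 * h)%N by rewrite mul2n -[LHS]odd_double_half (negPf hd) add0n.
have hpos : (0 < h)%N by move: dpos; rewrite dE; lia.
have e1 : ((3 * d) %/ 2)%N = (3 * h)%N by rewrite dE mulnCA mulKn.
have e2 : ((d - 2) %/ 2)%N = h.-1.
  by rewrite dE -(prednK hpos) mulnSr addnK mulKn.
rewrite e1 e2.
set x := (#|F|%:R : algC) in key *.
set y := x ^+ h.-1.
have hx : x != 0 by rewrite pnatr_eq0 -lt0n ltnW // q_gt1.
have hy : y != 0 by rewrite expf_neq0.
have Eh : x ^+ h = x * y by rewrite /y -exprS prednK.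
have E3 : x ^+ (3 * h) = (x * y) ^+ 3 by rewrite mulnC exprM Eh.
have Ed : x ^+ d = (x * y) ^+ 2 by rewrite dE mulnC exprM Eh.
rewrite exprMn Ed Eh in key.
rewrite E3.
have sig2 : sig F ^+ 2 = 1 by rewrite /sig; case: ifP; rewrite ?expr1n // sqrrN expr1n.
have sgcase : forall tau : algC, sig F ^+ h = tau -> tau ^+ 2 = 1.
  by move=> tau <-; rewrite -exprM mulnC exprM sig2 expr1n.
split.
  move=> /andP [/eqP d2 /eqP q3].
  have hodd : odd h by move: d2; rewrite dE; move: hpos; clear; lia.
  have sgm : sig F = -1.
    rewrite /sig; case: existsP => // [[i /eqP hi]].
    by move: (sq_m1_mod4 oddF hi); rewrite q3.
  have st : sig F ^+ h = -1 by rewrite sgm -signr_odd hodd expr1.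
  rewrite st in key.
  have := final_alg hx hy (sgcase _ st) key.
  by move=> ->; rewrite /y; field.
move=> hc.
have st : sig F ^+ h = 1.
  case/orP: hc => [/eqP d0 | /andP [_ /eqP q1]].
    have hev : h = (2 * (h %/ 2))%N by move: d0; rewrite dE; clear; lia.
    by rewrite hev exprM sig2 expr1n.
  have [i hi] := mod4_sq_m1 oddF q1.
  rewrite /sig; case: existsP => [_|hn]; first by rewrite expr1n.
  by exfalso; apply: hn; exists i; rewrite hi.
rewrite st in key.
have := final_alg hx hy (sgcase _ st) key.
by move=> ->; rewrite /y; field.
Qed.
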